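(* Let $n\ge 2$, $1\le i\le n-1$, $0\le j\le n-1$, and let $G^*$ be a graph on $n$ vertices with at most one loop per vertex, with adjacency eigenvalues $\lambda_1\ge\cdots\ge\lambda_n$ and average degree $d$. If $\lambda_{i+1}-\lambda_{n-j}=\frac{n}{2}\sqrt{\frac{i+j+1}{i(j+1)}}$, then $\lambda_{i+1}\ge 0\ge\lambda_{n-j}$, $\lambda_1=d=\frac n2$, $\lambda_2=\cdots=\lambda_{i+1}=\frac n2\sqrt{\frac{j+1}{i(i+j+1)}}$, $\lambda_{n-j}=\cdots=\lambda_n=-\frac n2\sqrt{\frac{i}{(j+1)(i+j+1)}}$, and $\lambda_{i+2}=\cdots=\lambda_{n-j-1}=0$. *)

(* Defs.v *)
From HB Require Import structures.
From mathcomp Require Import all_boot all_order all_algebra.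
Set Implicit Arguments. Unset Strict Implicit. Unset Printing Implicit Defensive.
Import Order.TTheory GRing.Theory Num.Theory.
Local Open Scope ring_scope.

(* A graph on vertex set 'I_n with at most one loop per vertex is given by a
   symmetric relation e (e v v = true means a loop at v). *)
Definition adjmx (R : nzRingType) (n : nat) (e : rel 'I_n) : 'M[R]_n :=
  \matrix_(u, v) (e u v)%:R.

Definition avg_degree (R : fieldType) (n : nat) (e : rel 'I_n) : R :=
  (\sum_(u < n) \sum_(v < n) adjmx R e u v) / n%:R.

Definition sorted_spectrum (R : rcfType) (n : nat) (A : 'M[R]_n) (lam : seq R) :=
  [/\ size lam = n, sorted >=%R lam & char_poly A = \prod_(x <- lam) ('X - x%:P)].

(* 1-based access: eig lam k = lambda_k *)
Definition eig (R : rcfType) (lam : seq R) (k : nat) : R := nth 0 lam k.-1.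

(* Main.v *)
Require Import Defs.
From HB Require Import structures.
From mathcomp Require Import all_boot all_order all_algebra.
From mathcomp Require Import complex.
From mathcomp Require Import ring lra zify.
Import Order.TTheory GRing.Theory Num.Theory.
Local Open Scope ring_scope.
Local Open Scope sesquilinear_scope.

Lemma char_poly_conj (F : fieldType) n (P B : 'M[F]_n) : P \in unitmx ->
  char_poly (invmx P *m B *m P) = char_poly B.
Proof.
move=> Pu.
have E : char_poly_mx (invmx P *m B *m P) =
   map_mx polyC (invmx P) *m char_poly_mx B *m map_mx polyC P.
  rewrite /char_poly_mx mulmxBr mulmxBl !map_mxM; congr (_ - _).
  by rewrite mul_mx_scalar -scalemxAl -map_mxM mulVmx // map_mx1 scalemx1.
rewrite /char_poly E !det_mulmx !det_map_mx /= mulrC mulrA -rmorphM.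
by rewrite -det_mulmx mulmxV // det1 rmorph1 mul1r.
Qed.

Lemma tr_conj2 (F : comNzRingType) n (P Q B : 'M[F]_n) : P *m Q = 1%:M ->
  \tr ((Q *m B *m P) *m (Q *m B *m P)) = \tr (B *m B).
Proof.
move=> PQ.
have -> : (Q *m B *m P) *m (Q *m B *m P) = Q *m (B *m B *m P).
  by rewrite -!mulmxA; rewrite (mulmxA P) PQ mul1mx.
transitivity (\tr (B *m B *m P *m Q)); first exact: mxtrace_mulC.
by rewrite -mulmxA PQ mulmx1.
Qed.

Lemma spec (R : rcfType) n (A : 'M[R]_n) (lam : seq R) :
  A^T = A -> char_poly A = \prod_(x <- lam) ('X - x%:P) ->
  \sum_(x <- lam) x ^+ 2 = \sum_u \sum_v A u v * A v u /\
  (forall b, (forall x, x \in lam -> x <= b) ->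
      \sum_u \sum_v A u v <= n%:R * b).
Proof.
move=> Asym Ach.
pose toC := real_complex R.
pose Ac := map_mx toC A.
have symc : Ac \is symmetricmx.
  by apply/is_hermitianmxP; rewrite expr0 scale1r map_mx_id // map_trmx Asym.
have realc : Ac \is a mxOver Num.real.
  by apply/mxOverP => u v; rewrite mxE; apply/complex_realP; eexists.
have hermc := realsym_hermsym symc realc.
have /orthomx_spectralP AcE := hermitian_normalmx hermc.
set P := spectralmx Ac in AcE; set D := spectral_diag Ac in AcE.
have Pun : P \is unitarymx by apply: spectral_unitarymx.
have Pu : P \in unitmx by apply: spectral_unit.
have chc : char_poly Ac = \prod_(x <- map toC lam) ('X - x%:P).
  by rewrite -map_char_poly Ach map_prod_XsubC big_map.
have chd : char_poly Ac = \prod_(x <- [seq D 0 k | k <- enum 'I_n]) ('X - x%:P).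
  rewrite {1}AcE char_poly_conj // char_poly_trig ?diag_mx_is_trig //.
  by rewrite big_map big_enum /=; apply: eq_bigr => k _; rewrite mxE eqxx.
have pe : perm_eq (map toC lam) [seq D 0 k | k <- enum 'I_n].
  by apply: prod_XsubC_eq; rewrite -chc -chd.
have PtP : P^t* *m P = 1%:M.
  by apply: mulmx1C; apply/unitarymxP.
have PPi : P *m P^t* = 1%:M by apply/unitarymxP.
have AcE' : Ac = P^t* *m diag_mx D *m P.
  by rewrite {1}AcE invmx_unitary //.
have entry a b : Ac a b = \sum_k (P k a)^* * D 0 k * P k b.
  rewrite AcE' mul_mx_diag mxE; apply: eq_bigr => k _.
  by rewrite !mxE.
have Dmem k : D 0 k \in map toC lam.
  by rewrite (perm_mem pe); apply: map_f; rewrite mem_enum.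
split.
  apply: complexI; rewrite rmorph_sum /=.
  transitivity (\sum_(y <- map toC lam) y ^+ 2).
    by rewrite big_map; apply: eq_bigr => x _; rewrite rmorphXn.
  rewrite (perm_big _ pe) big_map big_enum /=.
  have -> : (\sum_(u < n) \sum_(v < n) A u v * A v u)%:C%C = \tr (Ac *m Ac).
    rewrite rmorph_sum /mxtrace; apply: eq_bigr => u _.
    rewrite rmorph_sum mxE; apply: eq_bigr => v _.
    by rewrite rmorphM !mxE.
  rewrite AcE' (@tr_conj2 _ _ _ _ _ PPi) /mxtrace.
  by apply: eq_bigr => k _; rewrite mul_mx_diag !mxE eqxx mulr1n.
move=> b Hb.
pose z k := \sum_v P k v.
have H1 : real_complex R (\sum_u \sum_v A u v) = \sum_k D 0 k * (z k * (z k)^*).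
  transitivity (\sum_u \sum_v Ac u v).
    rewrite /toC rmorph_sum; apply: eq_bigr => u _.
    by rewrite rmorph_sum; apply: eq_bigr => v _; rewrite mxE.
  under eq_bigr do under eq_bigr do rewrite entry.
  rewrite exchange_big /=; under eq_bigr do rewrite exchange_big /=.
  rewrite exchange_big /=; apply: eq_bigr => k _.
  rewrite /z rmorph_sum mulr_suml mulr_sumr; apply: eq_bigr => v _.
  rewrite !mulr_sumr; apply: eq_bigr => u _; ring.
have H2 : \sum_k z k * (z k)^* = n%:R.
  transitivity (\sum_u \sum_v (P^t* *m P) u v); last first.
    rewrite PtP (eq_bigr (fun _ => 1)).
      by rewrite sumr_const card_ord.
    move=> u _; rewrite (bigD1 u) //= big1 ?addr0; first by rewrite mxE eqxx.
    by move=> v vu; rewrite mxE eq_sym (negbTE vu).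
  under [RHS]eq_bigr do under eq_bigr do rewrite mxE.
  rewrite exchange_big /=; under [RHS]eq_bigr do rewrite exchange_big /=.
  rewrite [RHS]exchange_big /=; apply: eq_bigr => k _.
  rewrite /z rmorph_sum mulr_suml; apply: eq_bigr => v _.
  rewrite !mulr_sumr; apply: eq_bigr => u _; rewrite !mxE; ring.
rewrite -lecR H1 rmorphM /= rmorph_nat -H2 mulr_suml.
apply: ler_sum => k _; rewrite [X in _ <= X]mulrC; apply: ler_wpM2r; first exact: mul_conjC_ge0.
by have /mapP [x xin ->] := Dmem k; rewrite lecR; apply: Hb.
Qed.

Local Close Scope sesquilinear_scope.

Lemma sum_nat_ge0 (R : realDomainType) a b (H : nat -> R) :
  (forall k, (a <= k < b)%N -> 0 <= H k) -> 0 <= \sum_(a <= k < b) H k.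
Proof.
move=> h; rewrite big_nat_cond; apply: sumr_ge0 => k /andP[/andP[]] *.
by apply: h; apply/andP.
Qed.

Lemma sum_nat_eq0 (R : realDomainType) a b (H : nat -> R) :
  (forall k, (a <= k < b)%N -> 0 <= H k) -> \sum_(a <= k < b) H k = 0 ->
  forall k, (a <= k < b)%N -> H k = 0.
Proof.
elim: b => [|b IH] le E k /andP[ak kb]; first by lia.
have [ab|ba] := leqP a b; last by lia.
move: E; rewrite big_nat_recr //= => E.
have h1 : 0 <= \sum_(a <= k < b) H k.
  by apply: sum_nat_ge0 => x /andP[ax xb]; apply: le; lia.
have h2 : 0 <= H b by apply: le; lia.
have e2 : H b = 0 by lra.
have e1 : \sum_(a <= k < b) H k = 0 by lra.
have [kb'|kb'] := ltnP k b.
  by apply: IH => //; [move=> x /andP[ax xb]; apply: le; lia | lia].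
by have -> : k = b by lia.
Qed.

Lemma sum_ge_eq (R : realDomainType) a b (F G : nat -> R) :
  (forall k, (a <= k < b)%N -> G k <= F k) ->
  \sum_(a <= k < b) F k = \sum_(a <= k < b) G k ->
  forall k, (a <= k < b)%N -> F k = G k.
Proof.
move=> le E k hk; apply/eqP; rewrite -subr_eq0; apply/eqP.
apply: (@sum_nat_eq0 _ a b (fun k => F k - G k)) => //.
  by move=> x hx; rewrite subr_ge0 le.
by rewrite sumrB E subrr.
Qed.

Lemma posapprox (R : realDomainType) (s : R) : exists sp,
  [/\ 0 <= sp, s <= sp & forall x, s <= x -> sp ^+ 2 <= x ^+ 2].
Proof.
case: (lerP 0 s) => h.
  by exists s; split => // x hx; nra.
by exists 0; split => // [|x _]; [lra | nra].
Qed.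

Lemma sum7 (R : realDomainType) (a1 a2 a3 a4 a5 a6 a7 : R) :
  0 <= a1 -> 0 <= a2 -> 0 <= a3 -> 0 <= a4 -> 0 <= a5 -> 0 <= a6 -> 0 <= a7 ->
  a1 + a2 + a3 + a4 + a5 + a6 + a7 = 0 ->
  a1 = 0 /\ a2 = 0 /\ a3 = 0 /\ a4 = 0 /\ a5 = 0 /\ a6 = 0 /\ a7 = 0.
Proof. by move=> *; do ! split; lra. Qed.

Lemma sqrt_id (R : rcfType) (x y : R) : 0 <= y -> y ^+ 2 = x -> Num.sqrt x = y.
Proof. by move=> y0 <-; rewrite sqrtr_sqr ger0_norm. Qed.

Lemma pmul_eq0 (R : numDomainType) (a x : R) : 0 < a -> a * x = 0 -> x = 0.
Proof. by move=> a0 /eqP; rewrite mulf_eq0 gt_eqF //= => /eqP. Qed.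

Lemma sqr_inj0 (R : numDomainType) (x y : R) : 0 <= x -> 0 <= y -> x ^+ 2 = y ^+ 2 -> x = y.
Proof. by move=> x0 y0 /eqP; rewrite eqrXn2 // => /eqP. Qed.

Lemma solve2 (R : numFieldType) (I J s t a : R) : 0 < I -> 0 < J ->
  s - t = a -> I * s + J * t = 0 ->
  s = J * a / (I + J) /\ t = - (I * a / (I + J)).
Proof.
move=> I0 J0 <- E.
have IJ : I + J != 0 by rewrite gt_eqF // addr_gt0.
have -> : J * (s - t) = (I + J) * s - (I * s + J * t) by ring.
have -> : I * (s - t) = - ((I + J) * t - (I * s + J * t)) by ring.
by rewrite E !subr0 !(mulrC (I + J)) mulNr !mulfK // opprK.
Qed.

Arguments sum7 {R a1 a2 a3 a4 a5 a6 a7}.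
Arguments pmul_eq0 {R a x}.
Arguments solve2 {R I J s t a}.

Lemma identE (R : numFieldType) (I J sp tp s t S1 S2 SM f0 d N : R) :
   I * J * ((sp + tp) ^+ 2 - (s - t) ^+ 2) + (I * sp - J * tp) ^+ 2 +
   (I + J) * (S1 - I * sp ^+ 2) + (I + J) * (S2 - J * tp ^+ 2) + (I + J) * SM +
   (I + J) * (f0 ^+ 2 - d ^+ 2) + (I + J) * (N / 2 - d) ^+ 2 =
   (I + J) * (f0 ^+ 2 + S1 + SM + S2 - N * d) +
   ((I + J) * (N / 2) ^+ 2 - I * J * (s - t) ^+ 2).
Proof. by field. Qed.

Lemma core (R : rcfType) (n i j : nat) (f : nat -> R) (m : R) :
  (2 <= n)%N -> (1 <= i <= n.-1)%N -> (j <= n.-1)%N ->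
  (forall a b, (a <= b < n)%N -> f b <= f a) ->
  \sum_(0 <= k < n) f k ^+ 2 = m -> m <= n%:R * f 0%N ->
  f i - f (n - j).-1 = n%:R / 2 * Num.sqrt ((i + j + 1)%:R / (i * j.+1)%:R) ->
  [/\ 0 <= f i /\ f (n - j).-1 <= 0, f 0%N = m / n%:R /\ m / n%:R = n%:R / 2,
      forall k, (1 <= k <= i)%N ->
        f k = n%:R / 2 * Num.sqrt ((j.+1)%:R / (i * (i + j + 1))%:R),
      forall k, ((n - j).-1 <= k < n)%N ->
        f k = - (n%:R / 2 * Num.sqrt (i%:R / (j.+1 * (i + j + 1))%:R))
    & forall k, (i.+1 <= k < (n - j).-1)%N -> f k = 0].
Proof.
move=> n2 /andP[i1 iN] jN mono sq ray hyp.
set N := n%:R; set I := i%:R; set J := j.+1%:R.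
have N0 : 0 < N by rewrite ltr0n; lia.
have I0 : 0 < I by rewrite ltr0n; lia.
have J0 : 0 < J by rewrite ltr0n.
have cE : (i + j + 1)%:R / (i * j.+1)%:R = (I + J) / (I * J) :> R.
  by rewrite natrM -natrD addn1 addnS.
rewrite cE in hyp.
set c := (I + J) / (I * J) in hyp.
have c0 : 0 < c by apply: divr_gt0; [lra | apply: mulr_gt0].
set r := Num.sqrt c in hyp.
have r0 : 0 < r by rewrite sqrtr_gt0.
have rr : r ^+ 2 = c by rewrite sqr_sqrtr // ltW.
set s := f i in hyp *; set p := (n - j).-1 in hyp *; set t := f p in hyp *.
have ip : (i < p)%N.
  rewrite ltnNge; apply/negP => H.
  have : s <= t by apply: mono; rewrite H /=; lia.
  have : 0 < N / 2 * r by apply: mulr_gt0 => //; lra.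
  lra.
have pE : p = (n - j).-1 by [].
have pn : (p < n)%N by lia.
have nmp : (n - p)%N = j.+1 by lia.
have iN' : (i < n)%N by lia.
have n0 : (0 < n)%N by lia.
set S1 := \sum_(1 <= k < i.+1) f k ^+ 2.
set SM := \sum_(i.+1 <= k < p) f k ^+ 2.
set S2 := \sum_(p <= k < n) f k ^+ 2.
have split : m = f 0%N ^+ 2 + S1 + SM + S2.
  rewrite -sq big_ltn; last exact: n0.
  rewrite (@big_cat_nat _ _ _ i.+1) /=; [|by []|exact: iN'].
  rewrite (@big_cat_nat _ _ _ p i.+1 n) /=; [|exact: ip|exact: ltnW pn].
  by rewrite /S1 /SM /S2 !addrA.
have [sp [sp0 ssp spb]] := posapprox _ s.
have [tp [tp0 ttp tpb]] := posapprox _ (- t).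
have S1b : I * sp ^+ 2 <= S1.
  have -> : I * sp ^+ 2 = \sum_(1 <= k < i.+1) sp ^+ 2.
    by rewrite sumr_const_nat subn1 /= mulr_natl.
  rewrite big_nat_cond [X in _ <= X]big_nat_cond; apply: ler_sum => k /andP[/andP[k1 ki] _].
  by apply: spb; apply: (mono k i); rewrite -ltnS ki iN'.
have S2b : J * tp ^+ 2 <= S2.
  have -> : J * tp ^+ 2 = \sum_(p <= k < n) tp ^+ 2.
    by rewrite sumr_const_nat nmp mulr_natl.
  rewrite big_nat_cond [X in _ <= X]big_nat_cond; apply: ler_sum => k /andP[/andP[k1 ki] _].
  by rewrite -[f k ^+ 2]sqrrN; apply: tpb; rewrite lerN2; apply: (mono p k); rewrite k1 ki.
have SMb : 0 <= SM by apply: sum_nat_ge0 => k _; apply: sqr_ge0.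
set d := m / N.
have md : m = N * d by rewrite /d mulrC divfK // gt_eqF.
have dray : d <= f 0%N by rewrite /d ler_pdivrMr // mulrC.
have m0 : 0 <= m.
  have h1 : 0 <= I * sp ^+ 2 by apply: mulr_ge0; [lra | apply: sqr_ge0].
  have h2 : 0 <= J * tp ^+ 2 by apply: mulr_ge0; [lra | apply: sqr_ge0].
  have h3 := sqr_ge0 (f 0%N).
  rewrite split; lra.
have d0 : 0 <= d by rewrite /d divr_ge0 // ltW.
have K : I * J * (s - t) ^+ 2 = (I + J) * (N / 2) ^+ 2.
  rewrite hyp exprMn rr /c -/N; field.
  have hj : 0 <= j%:R :> R := ler0n _ _.
  have hi : 0 < i%:R :> R by rewrite ltr0n.
  by rewrite !gt_eqF //; lra.
have st0 : 0 <= s - t by rewrite hyp; apply: mulr_ge0; [lra | exact: ltW].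
have e1p : 0 <= I * J * ((sp + tp) ^+ 2 - (s - t) ^+ 2).
  apply: mulr_ge0; first by apply: mulr_ge0; apply: ltW.
  rewrite subr_sqr; apply: mulr_ge0; lra.
have e2p : 0 <= (I * sp - J * tp) ^+ 2 by apply: sqr_ge0.
have IJ0 : 0 <= I + J by lra.
have e3p : 0 <= (I + J) * (S1 - I * sp ^+ 2) by apply: mulr_ge0; lra.
have e4p : 0 <= (I + J) * (S2 - J * tp ^+ 2) by apply: mulr_ge0; lra.
have e5p : 0 <= (I + J) * SM by apply: mulr_ge0.
have e6p : 0 <= (I + J) * (f 0%N ^+ 2 - d ^+ 2).
  by apply: mulr_ge0 => //; rewrite subr_sqr; apply: mulr_ge0; lra.
have e7p : 0 <= (I + J) * (N / 2 - d) ^+ 2 by apply: mulr_ge0; rewrite ?sqr_ge0.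
have E := identE _ I J sp tp s t S1 S2 SM (f 0%N) d N.
rewrite -split -md K !subrr mulr0 addr0 in E.
have [z1 [z2 [z3 [z4 [z5 [z6 z7]]]]]] := sum7 e1p e2p e3p e4p e5p e6p e7p E.
have IJp : 0 < I * J by apply: mulr_gt0.
have IJs : 0 < I + J by lra.
have {z1} z1 := pmul_eq0 IJp z1.
have {z3} z3 := pmul_eq0 IJs z3.
have {z4} z4 := pmul_eq0 IJs z4.
have {z5} z5 := pmul_eq0 IJs z5.
have {z6} z6 := pmul_eq0 IJs z6.
have {z7} z7 := pmul_eq0 IJs z7.
have e1 : s - t = sp + tp.
  by apply: sqr_inj0 => //; [lra | apply/eqP; rewrite eq_sym -subr_eq0; apply/eqP].
have ssp' : sp = s by lra.
have ttp' : tp = - t by lra.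
have e2 : I * s + J * t = 0.
  move: z2 => /eqP; rewrite sqrf_eq0 ssp' ttp' mulrN opprK => /eqP //.
have s0 : 0 <= s by lra.
have t0 : t <= 0 by lra.
have f0d : f 0%N = d.
  apply: sqr_inj0 => //; first by apply: le_trans dray.
  by apply/eqP; rewrite -subr_eq0; apply/eqP.
have dN : d = N / 2.
  by move: z7 => /eqP; rewrite sqrf_eq0 subr_eq0 => /eqP.
have [sE tE] := solve2 I0 J0 hyp e2.
have hj : 0 <= j%:R :> R := ler0n _ _.
have hi : 0 < i%:R :> R by rewrite ltr0n.
have nE1 : (i * (i + j + 1))%:R = I * (I + J) :> R.
  by rewrite natrM -addnA addn1 natrD.
have nE2 : (j.+1 * (i + j + 1))%:R = J * (I + J) :> R.
  by rewrite natrM -addnA addn1 natrD.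
split.
- by [].
- by [].
- move=> k hk.
  have S1E : S1 = \sum_(1 <= k < i.+1) s ^+ 2.
    rewrite sumr_const_nat subn1 /= -mulr_natl -/I -ssp'.
    by apply/eqP; rewrite -subr_eq0; apply/eqP.
  have := @sum_ge_eq _ 1 i.+1 (fun k => f k ^+ 2) (fun _ => s ^+ 2).
  move=> /(_ _ S1E k) h.
  have fk : f k = s.
    have sk : s <= f k by apply: (mono k i); case/andP: hk => _ ->; exact: iN'.
    apply: sqr_inj0; [lra | lra | apply: h; last exact: hk].
    by move=> x hx; rewrite -ssp'; apply: spb; apply: (mono x i); case/andP: hx => _ hx; rewrite -ltnS hx iN'.
  rewrite fk sE nE1 (@sqrt_id _ _ (J * r / (I + J))).
  + rewrite -/N; field; by rewrite !gt_eqF //; lra.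
  + by apply: divr_ge0; [apply: mulr_ge0; apply: ltW | apply: ltW].
  + rewrite expr_div_n exprMn rr /c; field; by rewrite !gt_eqF //; lra.
- move=> k hk.
  have S2E : S2 = \sum_(p <= k < n) t ^+ 2.
    rewrite sumr_const_nat nmp -mulr_natl -/J -sqrrN -ttp'.
    by apply/eqP; rewrite -subr_eq0; apply/eqP.
  have := @sum_ge_eq _ p n (fun k => f k ^+ 2) (fun _ => t ^+ 2).
  move=> /(_ _ S2E k) h.
  have fk : f k = t.
    have sk : f k <= t by apply: (mono p k); exact: hk.
    apply: oppr_inj; apply: sqr_inj0; [lra | lra | rewrite !sqrrN; apply: h; last exact: hk].
    move=> x hx; rewrite -sqrrN -ttp' -[f x ^+ 2]sqrrN; apply: tpb.
    by rewrite lerN2; apply: (mono p x); exact: hx.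
  rewrite fk tE nE2 (@sqrt_id _ _ (I * r / (I + J))).
  + rewrite -/N; congr (- _); field; by rewrite !gt_eqF //; lra.
  + by apply: divr_ge0; [apply: mulr_ge0; apply: ltW | apply: ltW].
  + rewrite expr_div_n exprMn rr /c; field; by rewrite !gt_eqF //; lra.
- move=> k hk.
  have h := @sum_nat_eq0 _ i.+1 p (fun k => f k ^+ 2)
    (fun x _ => sqr_ge0 (f x)) z5 k hk.
  by move: h => /eqP; rewrite sqrf_eq0 => /eqP.
Qed.

Theorem mainTheorem2 (R : rcfType) (n i j : nat) (e : rel 'I_n) (lam : seq R) :
  (2 <= n)%N -> (1 <= i <= n.-1)%N -> (j <= n.-1)%N ->
  symmetric e ->
  sorted_spectrum (adjmx R e) lam ->
  eig lam i.+1 - eig lam (n - j)%N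
    = n%:R / 2 * Num.sqrt ((i + j + 1)%:R / (i * j.+1)%:R) ->
  [/\ eig lam i.+1 >= 0 /\ 0 >= eig lam (n - j)%N,
      eig lam 1 = avg_degree R e /\ avg_degree R e = n%:R / 2,
      (forall k, (2 <= k <= i.+1)%N ->
         eig lam k = n%:R / 2 * Num.sqrt ((j.+1)%:R / (i * (i + j + 1))%:R)),
      (forall k, (n - j <= k <= n)%N ->
         eig lam k = - (n%:R / 2 * Num.sqrt (i%:R / (j.+1 * (i + j + 1))%:R)))
    & (forall k, (i.+2 <= k <= n - j - 1)%N -> eig lam k = 0)].
Proof.
move=> n2 hi jN esym [sz srt ch] hyp.
set A := adjmx R e in ch.
have Asym : A^T = A by apply/matrixP => u v; rewrite !mxE esym.
have [sq ray] := spec _ _ _ _ Asym ch.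
pose f k := nth 0 lam k.
set m := \sum_u \sum_v A u v in ray.
have trans_ge : transitive (>=%R : rel R).
  by move=> y x z h1 h2; exact: le_trans h2 h1.
have mono : forall a b, (a <= b < n)%N -> f b <= f a.
  move=> a b /andP[ab bn].
  have := sorted_leq_nth trans_ge (@lexx _ _) 0 srt; apply => //; rewrite inE sz //.
  by apply: leq_ltn_trans bn.
have sq' : \sum_(0 <= k < n) f k ^+ 2 = m.
  rewrite (big_nth 0) in sq; rewrite -sz sq /m.
  apply: eq_bigr => u _; apply: eq_bigr => v _.
  by rewrite /A !mxE esym; case: (e v u); rewrite ?mulr1 ?mulr0.
have ray' : m <= n%:R * f 0%N.
  apply: ray => x xl; rewrite -(nth_index 0 xl).
  have := sorted_leq_nth trans_ge (@lexx _ _) 0 srt; apply => //.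
    by rewrite inE sz; lia.
  by rewrite inE index_mem.
have := core _ _ _ _ f m n2 hi jN mono sq' ray' hyp.
move=> [[s0 t0] [f0 dN] H1 H2 H3].
split.
- by split.
- by split.
- move=> k hk; rewrite /eig; apply: H1; lia.
- move=> k hk; rewrite /eig; apply: H2; lia.
- move=> k hk; rewrite /eig; apply: H3; lia.
Qed.
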